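(* For $n\ge2$, let $b_n$ be the number of permutations in $\mathcal S_n$ that contain $(123,\emptyset,\{0,1\})$. Then $b_n=\frac12(n-1)!\,(n-2)$.
   Context: For $n\ge1$, $\mathcal S_n$ is the set of permutations $\pi=\pi_1\cdots\pi_n$ of $[n]$. A bi-vincular pattern of length $k$ is a triple $p=(\sigma,X,Y)$ with $\sigma\in\mathcal S_k$ and $X,Y\subseteq\{0,1,\dots,k\}$. A permutation $\pi\in\mathcal S_n$ contains $p$ if there are indices $1\le i_1<\dots<i_k\le n$ such that $(\pi_{i_1},\dots,\pi_{i_k})$ is order-isomorphic to $\sigma$ and, letting $j_1<\dots<j_k$ be the values $\pi_{i_1},\dots,\pi_{i_k}$ sorted increasingly and setting $i_0=j_0=0$, $i_{k+1}=j_{k+1}=n+1$, one has $i_{x+1}=i_x+1$ for all $x\in X$ and $j_{y+1}=j_y+1$ for all $y\in Y$. *)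

(* Defs.v *)
From mathcomp Require Import all_boot all_order all_fingroup.
Set Implicit Arguments. Unset Strict Implicit. Unset Printing Implicit Defensive.

(* Permutations of [n] are modelled as pi : 'S_n (permutations of 'I_n = {0..n-1});
   the paper's 1-based positions/values are obtained by adding 1.  *)

(* extended sequence  0 :: s ++ [:: n+1]  (sets i_0 = 0, i_{k+1} = n+1) *)
Definition ext_seq (n : nat) (s : seq nat) : seq nat := 0 :: rcons s n.+1.

Definition bivinc_occ (n k : nat) (pi : 'S_n) (sigma : 'S_k)
    (X Y : {set 'I_k.+1}) (f : 'I_k -> 'I_n) : bool :=
  let I := ext_seq n [seq (f a).+1 | a <- enum 'I_k] in
  let J := ext_seq n (sort leq [seq (pi (f a)).+1 | a <- enum 'I_k]) in
  [&& [forall a : 'I_k, forall b : 'I_k, (a < b) ==> (f a < f b)],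
      [forall a : 'I_k, forall b : 'I_k,
          (pi (f a) < pi (f b)) == (sigma a < sigma b)],
      [forall x in X, nth 0 I x.+1 == (nth 0 I x).+1] &
      [forall y in Y, nth 0 J y.+1 == (nth 0 J y).+1]].

Definition contains_bivinc (n k : nat) (pi : 'S_n) (sigma : 'S_k)
    (X Y : {set 'I_k.+1}) : bool :=
  [exists f : {ffun 'I_k -> 'I_n}, bivinc_occ pi sigma X Y f].

Definition pat123 : 'S_3 := 1.
Definition pat_Y : {set 'I_4} := [set (ord0 : 'I_4); (inord 1 : 'I_4)].

Definition b_count (n : nat) : nat :=
  #|[set pi : 'S_n | contains_bivinc pi pat123 set0 pat_Y]|.

(* Main.v *)
Require Import Defs.
From mathcomp Require Import all_boot all_order all_fingroup zify.
Lemma enum3 : enum 'I_3 = [:: ord0; inord 1; inord 2].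
Proof. apply: (inj_map val_inj); rewrite enumT unlock /= val_ord_enum /= !inordK //. Qed.
Section S.
Variables (m : nat) (pi : 'S_m.+2).
Local Notation z1 := (inord 1 : 'I_m.+2).
Lemma fwd (f : {ffun 'I_3 -> 'I_m.+2}) : bivinc_occ pi pat123 set0 pat_Y f ->
  ((pi^-1)%g ord0 < (pi^-1)%g z1) && ((pi^-1)%g z1 < m.+1).
Proof.
rewrite /bivinc_occ /ext_seq enum3 /=. move=> /and4P [H1 H2 _ H4].
have lt01 : (ord0 : 'I_3) < (inord 1 : 'I_3) by rewrite inordK.
have lt12 : (inord 1 : 'I_3) < (inord 2 : 'I_3) by rewrite !inordK.
have F01 := implyP (forallP (forallP H1 _) _) lt01.
have F12 := implyP (forallP (forallP H1 _) _) lt12.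
have P01 := eqP (forallP (forallP H2 ord0) (inord 1)).
have P12 := eqP (forallP (forallP H2 (inord 1)) (inord 2)).
rewrite /pat123 !perm1 lt01 in P01. rewrite /pat123 !perm1 lt12 in P12.
rewrite sorted_sort in H4; [|exact: leq_trans|by rewrite /= !ltnS (ltnW P01) (ltnW P12)].
have Y0 := eqP (implyP (forallP H4 ord0) (setU11 _ _)).
have Y1 := eqP (implyP (forallP H4 (inord 1)) (setU1r _ (set11 _))).
rewrite inordK //= in Y1. case: Y0 => Y0.
have e0 : pi (f ord0) = ord0 by apply: val_inj.
have e1 : pi (f (inord 1)) = z1 by apply: val_inj; rewrite /= inordK //; move: Y1; rewrite Y0 => -[].
rewrite -e0 -e1 !permK F01 /=.
by apply: leq_trans F12 _; rewrite -ltnS.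
Qed.
Lemma bwd : ((pi^-1)%g ord0 < (pi^-1)%g z1) && ((pi^-1)%g z1 < m.+1) ->
  contains_bivinc pi pat123 set0 pat_Y.
Proof.
move=> /andP [h01 h1].
set p0 := (pi^-1)%g ord0. set p1 := (pi^-1)%g z1.
pose f := [ffun a : 'I_3 => if val a == 0 then p0 else if val a == 1 then p1 else ord_max].
have e0 : pi p0 = ord0 by rewrite /p0 permKV.
have e1 : pi p1 = z1 by rewrite /p1 permKV.
have e2 : 1 < pi ord_max.
  rewrite ltnNge; apply/negP => hle.
  have : (pi ord_max == ord0) || (pi ord_max == z1).
    rewrite -!val_eqE /= inordK //. by case: (pi ord_max : nat) hle => [|[|]].
  have n0 : ord_max != p0 by rewrite -val_eqE /= neq_ltn (ltn_trans h01 h1) orbT.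
  have n1 : ord_max != p1 by rewrite -val_eqE /= neq_ltn h1 orbT.
  case/orP=> /eqP He.
    by move: n0; rewrite -e0 in He; rewrite (perm_inj He) eqxx.
  by move: n1; rewrite -e1 in He; rewrite (perm_inj He) eqxx.
apply/existsP; exists f; rewrite /bivinc_occ /ext_seq enum3 /=.
apply/and4P; split.
- apply/forallP => -[[|[|[|a]]] Ha] //; apply/forallP => -[[|[|[|b]]] Hb] //;
    rewrite !ffunE //= ?(ltn_trans h01 h1) //.
- have e2' : 0 < pi ord_max by apply: ltn_trans e2.
  have e3 : (pi ord_max < 1) = false by rewrite ltnNge e2'.
  apply/forallP => -[[|[|[|a]]] Ha] //; apply/forallP => -[[|[|[|b]]] Hb] //;
    rewrite /pat123 !perm1 !ffunE /= ?e0 ?e1 ?inordK //= ?e2 ?e2' ?e3 ?ltnn //.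
- by apply/forallP => x; rewrite in_set0.
- rewrite !ffunE /= !inordK //= e0 e1 /= inordK //.
  rewrite ltnS (ltnW e2).
  apply/forallP => y; apply/implyP; rewrite !inE => /orP [] /eqP -> //.
  by rewrite inordK.
Qed.
End S.
Lemma card_fix_le n (x v w : 'I_n) : #|[set pi : 'S_n | pi x == v]| <= #|[set pi : 'S_n | pi x == w]|.
Proof.
rewrite -(card_imset _ (mulIg (tperm v w))).
apply: subset_leq_card; apply/subsetP => y /imsetP [pi]; rewrite inE => /eqP hp ->.
by rewrite inE permM hp tpermL.
Qed.
Lemma card_fix n (x v : 'I_n) : #|[set pi : 'S_n | pi x == v]| = n.-1`!.
Proof.
have E : forall w, #|[set pi : 'S_n | pi x == w]| = #|[set pi : 'S_n | pi x == v]|.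
  by move=> w; apply/eqP; rewrite eqn_leq !card_fix_le.
have S : #|'S_n| = \sum_(w : 'I_n) #|[set pi : 'S_n | pi x == w]|.
  rewrite -sum1_card (partition_big (fun pi : 'S_n => pi x) predT) //=.
  apply: eq_bigr => w _; rewrite -sum1_card; apply: eq_bigl => pi; rewrite inE.
  by [].
have : n`! = n * #|[set pi : 'S_n | pi x == v]|.
  by rewrite -card_Sn S (eq_bigr _ (fun w _ => E w)) sum_nat_const card_ord.
clear S E; case: n x v => [|n] x v; first by case: x.
by rewrite factS => /eqP; rewrite eqn_pmul2l // => /eqP <-.
Qed.
Lemma natfact a b m : a < m.+2 -> b < m.+2 -> a != b -> ((a<b)&&(b<m.+1)) || ((b<a)&&(a<m.+1)) = (a != m.+1) && (b != m.+1).
Proof. move=> ha hb hab; apply/idP/idP; lia. Qed.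
Lemma natfact2 a b : ((a<b) && (b<a)) = false.
Proof. apply/negP; lia. Qed.
Lemma char m (pi : 'S_m.+2) : contains_bivinc pi pat123 set0 pat_Y =
  ((pi^-1)%g ord0 < (pi^-1)%g (inord 1 : 'I_m.+2)) && ((pi^-1)%g (inord 1 : 'I_m.+2) < m.+1).
Proof.
apply/idP/idP; last exact: bwd.
by case/existsP => f; apply: fwd.
Qed.
Definition Sset {m} (u v : 'I_m.+2) := [set pi : 'S_m.+2 | ((pi^-1)%g u < (pi^-1)%g v) && ((pi^-1)%g v < m.+1)].
Lemma S_le m (u v : 'I_m.+2) : #|Sset u v| <= #|Sset v u|.
Proof.
rewrite -(card_imset _ (mulIg (tperm u v))).
apply: subset_leq_card; apply/subsetP => y /imsetP [pi]; rewrite inE => H ->.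
by rewrite inE !invMg tpermV !permM tpermL tpermR.
Qed.
Lemma permE' n (pi : 'S_n) x v : (pi x == v) = ((pi^-1)%g v == x).
Proof. by apply/eqP/eqP => h; [rewrite -h permK | rewrite -h permKV]. Qed.

Theorem mainTheorem12 (n : nat) (hn : 2 <= n) :
  2 * b_count n = (n.-1)`! * (n - 2).
Proof.
case: n hn => [|[|m]] // _.
rewrite /b_count.
set z1 := (inord 1 : 'I_m.+2).
have -> : [set pi : 'S_m.+2 | contains_bivinc pi pat123 set0 pat_Y] = Sset ord0 z1.
  by apply/setP => pi; rewrite !inE char.
have eAB : #|Sset ord0 z1| = #|Sset z1 ord0| by apply/eqP; rewrite eqn_leq !S_le.
set C := [set pi : 'S_m.+2 | (pi ord_max != ord0) && (pi ord_max != z1)].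
have U : Sset ord0 z1 :|: Sset z1 ord0 = C.
  apply/setP => pi; rewrite !inE (permE' _ _ _ ord0) (permE' _ _ _ z1) -!val_eqE /=.
  apply: natfact => //.
  rewrite val_eqE; apply/negP => /eqP /perm_inj h.
  by move: (congr1 val h); rewrite /= inordK.
have I : Sset ord0 z1 :&: Sset z1 ord0 = set0.
  by apply/setP => pi; rewrite !inE andbACA natfact2.
have UI := cardsUI (Sset ord0 z1) (Sset z1 ord0).
rewrite U I cards0 addn0 -eAB addnn -mul2n in UI.
have DC : ~: C = [set pi : 'S_m.+2 | pi ord_max == ord0] :|: [set pi : 'S_m.+2 | pi ord_max == z1].
  by apply/setP => pi; rewrite !inE negb_and !negbK.
have DI : [set pi : 'S_m.+2 | pi ord_max == ord0] :&: [set pi : 'S_m.+2 | pi ord_max == z1] = set0.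
  apply/setP => pi; rewrite !inE; apply/negP => /andP [/eqP -> ] /eqP /(congr1 val).
  by rewrite /= inordK.
have UI2 := cardsUI [set pi : 'S_m.+2 | pi ord_max == ord0] [set pi : 'S_m.+2 | pi ord_max == z1].
rewrite -DC DI cards0 addn0 !card_fix /= in UI2.
have CC := cardsC C. rewrite card_Sn UI2 UI [(m.+2)`!]factS in CC.
rewrite subn2 /=. move: CC; generalize ((m.+1)`!) => k; rewrite !mulSn [k * m]mulnC; lia.
Qed.
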